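(* Let $\varphi : X\to X$ be a morphism in $\mathscr{C}$ with kernel $\kappa : K\to X$ and cokernel $\lambda : X\to L$. The following are equivalent: (1) $\varphi$ is both core invertible and dual core invertible; (2) $\varphi$ is both Moore–Penrose invertible and group invertible; (3) $\varphi$ is regular and $\kappa\lambda : K\to L$, $\kappa\kappa^{*} : K\to K$ and $\lambda^{*}\lambda : L\to L$ are all invertible. In this case, for every $\psi : X\to X$ with $\varphi\psi\varphi=\varphi$, $$\varphi^{\dagger}=[1_X-\lambda(\lambda^{*}\lambda)^{-1}\lambda^{*}]\psi[1_X-\kappa^{*}(\kappa\kappa^{*})^{-1}\kappa],$$ $$\varphi^{\#}=[1_X-\lambda(\kappa\lambda)^{-1}\kappa]\psi[1_X-\lambda(\kappa\lambda)^{-1}\kappa],$$ $$\varphi^{\mathrm{core}}=[1_X-\lambda(\kappa\lambda)^{-1}\kappa]\psi[1_X-\kappa^{*}(\kappa\kappa^{*})^{-1}\kappa],$$ $$\varphi_{\mathrm{core}}=[1_X-\lambda(\lambda^{*}\lambda)^{-1}\lambda^{*}]\psi[1_X-\lambda(\kappa\lambda)^{-1}\kappa].$$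
   Context: $\mathscr{C}$ is an additive category with an involution $*$: a map on morphisms sending $\varphi : X\to Y$ to $\varphi^* : Y \to X$ such that $(\varphi^* )^*=\varphi$, $(\varphi\psi)^*=\psi^*\varphi^*$ and $(\varphi+\phi)^*=\varphi^*+\phi^*$. Composition is written left to right: for $\varphi : X\to Y$ and $\psi : Y\to Z$, $\varphi\psi : X \to Z$ means ''first $\varphi$, then $\psi$''. A kernel of $\varphi : X\to Y$ is a morphism $\kappa : K\to X$ with $\kappa\varphi=0$ such that every $\alpha : M\to X$ with $\alpha\varphi=0$ factors uniquely as $\alpha=\alpha'\kappa$. A cokernel of $\varphi$ is a morphism $\lambda : Y\to L$ with $\varphi\lambda=0$ such that every $\beta : Y\to M$ with $\varphi\beta=0$ factors uniquely as $\beta=\lambda\beta'$. $\varphi$ is regular if there is $\chi$ with $\varphi\chi\varphi=\varphi$. A morphism is invertible if it has a two-sided inverse. For $\varphi : X\to X$ the following are defined. - The Moore–Penrose inverse $\varphi^\dagger$ is the unique $\chi$ with $\varphi\chi\varphi=\varphi$, $\chi\varphi\chi=\chi$, $(\varphi\chi)^*=\varphi\chi$ and $(\chi\varphi)^*=\chi\varphi$. - The group inverse $\varphi^{\#}$ is the unique $\chi$ with $\varphi\chi\varphi=\varphi$, $\chi\varphi\chi=\chi$ and $\varphi\chi=\chi\varphi$. - The core inverse $\varphi^{\mathrm{core}}$ is the unique $\chi$ with $(\varphi\chi)^*=\varphi\chi$, $\varphi\chi^2=\chi$ and $\chi\varphi^2=\varphi$. - The dual core inverse $\varphi_{\mathrm{core}}$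 is the unique $\chi$ with $(\chi\varphi)^*=\chi\varphi$, $\chi^2\varphi=\chi$ and $\varphi^2\chi=\varphi$. *)

(* Defs.v *)
From HB Require Import structures.
From mathcomp Require Import all_boot all_algebra.
Set Implicit Arguments. Unset Strict Implicit. Unset Printing Implicit Defensive.
Import GRing.Theory.
Local Open Scope ring_scope.

(* An additive category with involution.  Composition is written left to
   right: comp f g = "first f, then g". *)
Record invAddCat := InvAddCat {
  Ob : Type;
  Mor : Ob -> Ob -> zmodType;
  comp : forall X Y Z : Ob, Mor X Y -> Mor Y Z -> Mor X Z;
  idm : forall X : Ob, Mor X X;
  star : forall X Y : Ob, Mor X Y -> Mor Y X;
  compA : forall (X Y Z W : Ob) (f : Mor X Y) (g : Mor Y Z) (h : Mor Z W),
      comp (comp f g) h = comp f (comp g h);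
  comp1m : forall (X Y : Ob) (f : Mor X Y), comp (idm X) f = f;
  compm1 : forall (X Y : Ob) (f : Mor X Y), comp f (idm Y) = f;
  compDl : forall (X Y Z : Ob) (f g : Mor X Y) (h : Mor Y Z),
      comp (f + g) h = comp f h + comp g h;
  compDr : forall (X Y Z : Ob) (f : Mor X Y) (g h : Mor Y Z),
      comp f (g + h) = comp f g + comp f h;
  zero_ob : Ob;
  zero_ob_init : forall (X : Ob) (f : Mor zero_ob X), f = 0;
  zero_ob_term : forall (X : Ob) (f : Mor X zero_ob), f = 0;
  biprod : forall X Y : Ob, exists P : Ob, exists (i1 : Mor X P) (i2 : Mor Y P)
      (p1 : Mor P X) (p2 : Mor P Y),
      [/\ comp i1 p1 = idm X, comp i2 p2 = idm Y, comp i1 p2 = 0,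
          comp i2 p1 = 0 & comp p1 i1 + comp p2 i2 = idm P];
  starK : forall (X Y : Ob) (f : Mor X Y), star (star f) = f;
  star_comp : forall (X Y Z : Ob) (f : Mor X Y) (g : Mor Y Z),
      star (comp f g) = comp (star g) (star f);
  starD : forall (X Y : Ob) (f g : Mor X Y), star (f + g) = star f + star g
}.

Arguments Mor : clear implicits.
Arguments Ob : clear implicits.
Arguments comp {i X Y Z}.
Arguments idm {i}.
Arguments star {i X Y}.

Declare Scope cat_scope.
Notation "f ⋅ g" := (comp f g) (at level 40, left associativity) : cat_scope.
Local Open Scope cat_scope.

Section Defs.
Variable C : invAddCat.

Definition is_kernel (K X Y : Ob C) (kap : Mor C K X) (phi : Mor C X Y) : Prop :=
  kap ⋅ phi = 0 /\
  forall (M : Ob C) (a : Mor C M X), a ⋅ phi = 0 ->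
    exists! a' : Mor C M K, a = a' ⋅ kap.

Definition is_cokernel (X Y L : Ob C) (phi : Mor C X Y) (lam : Mor C Y L) : Prop :=
  phi ⋅ lam = 0 /\
  forall (M : Ob C) (b : Mor C Y M), phi ⋅ b = 0 ->
    exists! b' : Mor C L M, b = lam ⋅ b'.

Definition regular (X Y : Ob C) (phi : Mor C X Y) : Prop :=
  exists chi : Mor C Y X, phi ⋅ chi ⋅ phi = phi.

Definition is_inverse (X Y : Ob C) (f : Mor C X Y) (g : Mor C Y X) : Prop :=
  f ⋅ g = idm X /\ g ⋅ f = idm Y.

Definition invertible (X Y : Ob C) (f : Mor C X Y) : Prop :=
  exists g : Mor C Y X, is_inverse f g.

Definition is_MP (X : Ob C) (phi chi : Mor C X X) : Prop :=
  [/\ phi ⋅ chi ⋅ phi = phi, chi ⋅ phi ⋅ chi = chi,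
      star (phi ⋅ chi) = phi ⋅ chi & star (chi ⋅ phi) = chi ⋅ phi].

Definition is_group_inv (X : Ob C) (phi chi : Mor C X X) : Prop :=
  [/\ phi ⋅ chi ⋅ phi = phi, chi ⋅ phi ⋅ chi = chi & phi ⋅ chi = chi ⋅ phi].

Definition is_core_inv (X : Ob C) (phi chi : Mor C X X) : Prop :=
  [/\ star (phi ⋅ chi) = phi ⋅ chi, phi ⋅ (chi ⋅ chi) = chi
    & chi ⋅ (phi ⋅ phi) = phi].

Definition is_dual_core_inv (X : Ob C) (phi chi : Mor C X X) : Prop :=
  [/\ star (chi ⋅ phi) = chi ⋅ phi, (chi ⋅ chi) ⋅ phi = chi
    & (phi ⋅ phi) ⋅ chi = phi].

Definition MP_invertible (X : Ob C) (phi : Mor C X X) := exists chi, is_MP phi chi.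
Definition group_invertible (X : Ob C) (phi : Mor C X X) := exists chi, is_group_inv phi chi.
Definition core_invertible (X : Ob C) (phi : Mor C X X) := exists chi, is_core_inv phi chi.
Definition dual_core_invertible (X : Ob C) (phi : Mor C X X) :=
  exists chi, is_dual_core_inv phi chi.

End Defs.

(* Main.v *)
Require Import Defs.
From HB Require Import structures.
From mathcomp Require Import all_boot all_algebra.
Import GRing.Theory.
Local Open Scope ring_scope.
Local Open Scope cat_scope.

Lemma cA {C : invAddCat} {X Y Z W : Ob C} (f : Mor C X Y) (g : Mor C Y Z) (h : Mor C Z W) :
  (f ⋅ g) ⋅ h = f ⋅ (g ⋅ h).
Proof. exact: Defs.compA. Qed.
Lemma c1m {C : invAddCat} {X Y : Ob C} (f : Mor C X Y) : idm X ⋅ f = f.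
Proof. exact: Defs.comp1m. Qed.
Lemma cm1 {C : invAddCat} {X Y : Ob C} (f : Mor C X Y) : f ⋅ idm Y = f.
Proof. exact: Defs.compm1. Qed.
Lemma sC {C : invAddCat} {X Y Z : Ob C} (f : Mor C X Y) (g : Mor C Y Z) :
  star (f ⋅ g) = star g ⋅ star f.
Proof. exact: Defs.star_comp. Qed.
Lemma sK {C : invAddCat} {X Y : Ob C} (f : Mor C X Y) : star (star f) = f.
Proof. exact: Defs.starK. Qed.

Lemma comp0l {C : invAddCat} {X Y Z : Ob C} (h : Mor C Y Z) : (0 : Mor C X Y) ⋅ h = 0.
Proof. apply: (addrI ((0 : Mor C X Y) ⋅ h)); by rewrite addr0 -compDl addr0. Qed.
Lemma comp0r {C : invAddCat} {X Y Z : Ob C} (h : Mor C X Y) : h ⋅ (0 : Mor C Y Z) = 0.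
Proof. apply: (addrI (h ⋅ (0 : Mor C Y Z))); by rewrite addr0 -compDr addr0. Qed.
Lemma compNl {C : invAddCat} {X Y Z : Ob C} (f : Mor C X Y) (h : Mor C Y Z) : (- f) ⋅ h = - (f ⋅ h).
Proof. apply: (addrI (f ⋅ h)); by rewrite -compDl !subrr comp0l. Qed.
Lemma compNr {C : invAddCat} {X Y Z : Ob C} (f : Mor C X Y) (h : Mor C Y Z) : f ⋅ (- h) = - (f ⋅ h).
Proof. apply: (addrI (f ⋅ h)); by rewrite -compDr !subrr comp0r. Qed.
Lemma compBl {C : invAddCat} {X Y Z : Ob C} (f g : Mor C X Y) (h : Mor C Y Z) : (f - g) ⋅ h = f ⋅ h - g ⋅ h.
Proof. by rewrite compDl compNl. Qed.
Lemma compBr {C : invAddCat} {X Y Z : Ob C} (f : Mor C X Y) (g h : Mor C Y Z) : f ⋅ (g - h) = f ⋅ g - f ⋅ h.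
Proof. by rewrite compDr compNr. Qed.
Lemma star1 {C : invAddCat} {X : Ob C} : star (idm X) = idm X.
Proof. transitivity (star (idm X) ⋅ star (star (idm X))); first by rewrite sK cm1.
by rewrite -sC cm1 sK. Qed.
Lemma star0 {C : invAddCat} {X Y : Ob C} : star (0 : Mor C X Y) = 0.
Proof. apply: (addrI (star (0 : Mor C X Y))); by rewrite -starD !addr0. Qed.
Lemma starN {C : invAddCat} {X Y : Ob C} (f : Mor C X Y) : star (- f) = - star f.
Proof. apply: (addrI (star f)); by rewrite -starD !subrr star0. Qed.
Lemma starB {C : invAddCat} {X Y : Ob C} (f g : Mor C X Y) : star (f - g) = star f - star g.
Proof. by rewrite starD starN. Qed.

Lemma ker_mono {C : invAddCat} {K X Y : Ob C} {kap : Mor C K X} {phi : Mor C X Y} :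
  is_kernel kap phi -> forall M (x y : Mor C M K), x ⋅ kap = y ⋅ kap -> x = y.
Proof.
case=> h0 hu M x y e.
have /hu [a [_ ua]] : (x ⋅ kap) ⋅ phi = 0 by rewrite cA h0 comp0r.
by rewrite -(ua x erefl) -(ua y e).
Qed.

Lemma coker_epi {C : invAddCat} {X Y L : Ob C} {phi : Mor C X Y} {lam : Mor C Y L} :
  is_cokernel phi lam -> forall M (x y : Mor C L M), lam ⋅ x = lam ⋅ y -> x = y.
Proof.
case=> h0 hu M x y e.
have /hu [a [_ ua]] : phi ⋅ (lam ⋅ x) = 0 by rewrite -cA h0 comp0l.
by rewrite -(ua x erefl) -(ua y e).
Qed.

Lemma ker_split {C : invAddCat} {K X Y : Ob C} {kap : Mor C K X} {phi : Mor C X Y}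
  {chi : Mor C Y X} : is_kernel kap phi -> phi ⋅ chi ⋅ phi = phi ->
  exists a : Mor C X K, idm X - phi ⋅ chi = a ⋅ kap /\ kap ⋅ a = idm K.
Proof.
move=> hk e; have hk' := hk; case: hk' => h0 hu.
have /hu [a [ea _]] : (idm X - phi ⋅ chi) ⋅ phi = 0 by rewrite compBl c1m e subrr.
exists a; split=> //.
apply: (ker_mono hk); rewrite cA -ea c1m compBr cm1 -cA h0 comp0l.
by rewrite subr0.
Qed.

Lemma coker_split {C : invAddCat} {X Y L : Ob C} {phi : Mor C X Y} {lam : Mor C Y L}
  {chi : Mor C Y X} : is_cokernel phi lam -> phi ⋅ chi ⋅ phi = phi ->
  exists b : Mor C L Y, idm Y - chi ⋅ phi = lam ⋅ b /\ b ⋅ lam = idm L.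
Proof.
move=> hl e; have hl' := hl; case: hl' => h0 hu.
have /hu [b [eb _]] : phi ⋅ (idm Y - chi ⋅ phi) = 0 by rewrite compBr cm1 -cA e subrr.
exists b; split=> //.
apply: (coker_epi hl); rewrite -cA -eb cm1 compBl c1m cA h0 comp0r.
by rewrite subr0.
Qed.

Lemma ker_sym {C : invAddCat} {K X : Ob C} (kap : Mor C K X) (phi chi : Mor C X X) :
  is_kernel kap phi -> phi ⋅ chi ⋅ phi = phi -> star (phi ⋅ chi) = phi ⋅ chi ->
  invertible (kap ⋅ star kap).
Proof.
move=> hk e hs; have [a [ea ka]] := ker_split hk e.
have sp : star (idm X - phi ⋅ chi) = idm X - phi ⋅ chi by rewrite starB star1 hs.
exists (star a ⋅ a); split.
  rewrite cA -(cA (star kap)) -sC -ea sp ea (cA a) ka cm1 //.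
rewrite cA -(cA a kap) -ea -sp -sC ea -cA ka c1m -sC ka star1 //.
Qed.

Lemma coker_sym {C : invAddCat} {X L : Ob C} (lam : Mor C X L) (phi chi : Mor C X X) :
  is_cokernel phi lam -> phi ⋅ chi ⋅ phi = phi -> star (chi ⋅ phi) = chi ⋅ phi ->
  invertible (star lam ⋅ lam).
Proof.
move=> hl e hs; have [b [eb bl]] := coker_split hl e.
have sq : star (idm X - chi ⋅ phi) = idm X - chi ⋅ phi by rewrite starB star1 hs.
exists (b ⋅ star b); split.
  rewrite cA -(cA lam b) -eb -sq -sC -sC eb !cA bl cm1 bl star1 //.
rewrite cA -(cA (star b)) -sC -eb sq eb cA bl cm1 bl //.
Qed.

Lemma group_kl {C : invAddCat} {K X L : Ob C} (kap : Mor C K X) (lam : Mor C X L)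
  (phi g : Mor C X X) : is_kernel kap phi -> is_cokernel phi lam ->
  is_group_inv phi g -> invertible (kap ⋅ lam).
Proof.
move=> hk hl [e1 _ e3].
have [a [ea ka]] := ker_split hk e1.
have e1' : phi ⋅ g ⋅ phi = phi by [].
have [b [eb bl]] := coker_split hl e1'.
have eab : a ⋅ kap = lam ⋅ b by rewrite -ea -eb e3.
exists (b ⋅ a); split.
  by rewrite cA -(cA lam) -eab (cA a) ka cm1.
by rewrite cA -(cA a) eab (cA lam) bl cm1.
Qed.

Lemma inv_uniq {C : invAddCat} {X Y : Ob C} {f : Mor C X Y} {g g' : Mor C Y X} :
  is_inverse f g -> is_inverse f g' -> g = g'.
Proof. case=> g1 g2 [h1 h2]. by rewrite -[g]cm1 -h1 -cA g2 c1m. Qed.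

Lemma star_inv {C : invAddCat} {X Y : Ob C} {f : Mor C X Y} {g : Mor C Y X} :
  is_inverse f g -> is_inverse (star f) (star g).
Proof. case=> g1 g2; split; by rewrite -sC ?g1 ?g2 star1. Qed.

Lemma sym_left {C : invAddCat} {X : Ob C} {phi x y : Mor C X X} :
  phi ⋅ x ⋅ phi = phi -> phi ⋅ y ⋅ phi = phi ->
  star (phi ⋅ x) = phi ⋅ x -> star (phi ⋅ y) = phi ⋅ y -> phi ⋅ x = phi ⋅ y.
Proof.
move=> x1 y1 sx sy.
transitivity (phi ⋅ y ⋅ (phi ⋅ x)); first by rewrite -cA y1.
by rewrite -{1}sy -{1}sx -sC -cA x1 sy.
Qed.

Lemma sym_right {C : invAddCat} {X : Ob C} {phi x y : Mor C X X} :
  phi ⋅ x ⋅ phi = phi -> phi ⋅ y ⋅ phi = phi ->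
  star (x ⋅ phi) = x ⋅ phi -> star (y ⋅ phi) = y ⋅ phi -> x ⋅ phi = y ⋅ phi.
Proof.
move=> x1 y1 sx sy.
transitivity (x ⋅ phi ⋅ (y ⋅ phi)); first by rewrite (cA x) -(cA phi) y1.
by rewrite -{1}sx -{1}sy -sC (cA y) -(cA phi) x1 sy.
Qed.

Lemma MP_uniq {C : invAddCat} {X : Ob C} (phi x y : Mor C X X) :
  is_MP phi x -> is_MP phi y -> x = y.
Proof.
case=> x1 x2 x3 x4 [y1 y2 y3 y4].
have h1 := sym_left x1 y1 x3 y3.
have h2 := sym_right x1 y1 x4 y4.
transitivity (x ⋅ phi ⋅ x); first by rewrite x2.
by rewrite (cA x) h1 -cA h2 y2.
Qed.

Lemma group_uniq {C : invAddCat} {X : Ob C} (phi x y : Mor C X X) :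
  is_group_inv phi x -> is_group_inv phi y -> x = y.
Proof.
case=> x1 x2 x3 [y1 y2 y3].
have px : phi ⋅ (phi ⋅ x) = phi by rewrite x3 -cA x1.
have hx : phi ⋅ x = y ⋅ phi.
  transitivity (phi ⋅ y ⋅ phi ⋅ x); first by rewrite y1.
  by rewrite y3 !cA px.
have hxy : phi ⋅ x = phi ⋅ y by rewrite hx y3.
transitivity (x ⋅ phi ⋅ x); first by rewrite x2.
by rewrite (cA x) hxy -cA -x3 hxy y3 y2.
Qed.

Lemma core_d1 {C : invAddCat} {X : Ob C} {phi x : Mor C X X} :
  is_core_inv phi x -> phi ⋅ x ⋅ phi = phi.
Proof.
case=> x1 x2 x3.
transitivity (phi ⋅ x ⋅ (x ⋅ (phi ⋅ phi))); first by rewrite x3.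
by rewrite (cA phi) -(cA x x) -(cA phi (x ⋅ x)) x2 x3.
Qed.

Lemma core_d2 {C : invAddCat} {X : Ob C} {phi x : Mor C X X} :
  is_core_inv phi x -> x ⋅ phi ⋅ x = x.
Proof.
case=> x1 x2 x3.
transitivity (x ⋅ phi ⋅ (phi ⋅ (x ⋅ x))); first by rewrite x2.
by rewrite (cA x) -(cA phi phi) -(cA x (phi ⋅ phi)) x3 x2.
Qed.

Lemma core_uniq {C : invAddCat} {X : Ob C} (phi x y : Mor C X X) :
  is_core_inv phi x -> is_core_inv phi y -> x = y.
Proof.
move=> hx hy; have d1x := core_d1 hx; have d1y := core_d1 hy.
have d2x := core_d2 hx.
case: hx => x1 x2 x3; case: hy => y1 y2 y3.
have hxy := sym_left d1x d1y x1 y1.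
transitivity (x ⋅ phi ⋅ x); first by rewrite d2x.
by rewrite (cA x) hxy -{1}y2 -(cA phi phi) -(cA x (phi ⋅ phi)) x3 y2.
Qed.

Lemma dcore_d1 {C : invAddCat} {X : Ob C} {phi x : Mor C X X} :
  is_dual_core_inv phi x -> phi ⋅ x ⋅ phi = phi.
Proof.
case=> x1 x2 x3.
have x2' : x ⋅ (x ⋅ phi) = x by rewrite -cA.
have x3' : phi ⋅ (phi ⋅ x) = phi by rewrite -cA.
transitivity ((phi ⋅ phi ⋅ x) ⋅ x ⋅ phi); first by rewrite x3.
by rewrite !cA x2' x3'.
Qed.

Lemma dcore_d2 {C : invAddCat} {X : Ob C} {phi x : Mor C X X} :
  is_dual_core_inv phi x -> x ⋅ phi ⋅ x = x.
Proof.
case=> x1 x2 x3.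
have x2' : x ⋅ (x ⋅ phi) = x by rewrite -cA.
have x3' : phi ⋅ (phi ⋅ x) = phi by rewrite -cA.
transitivity ((x ⋅ x ⋅ phi) ⋅ phi ⋅ x); first by rewrite x2.
by rewrite !cA x3' x2'.
Qed.

Lemma dcore_uniq {C : invAddCat} {X : Ob C} (phi x y : Mor C X X) :
  is_dual_core_inv phi x -> is_dual_core_inv phi y -> x = y.
Proof.
move=> hx hy; have d1x := dcore_d1 hx; have d1y := dcore_d1 hy.
have d2x := dcore_d2 hx.
case: hx => x1 x2 x3; case: hy => y1 y2 y3.
have y2' : y ⋅ (y ⋅ phi) = y by rewrite -cA.
have x3' : phi ⋅ (phi ⋅ x) = phi by rewrite -cA.
have hxy := sym_right d1x d1y x1 y1.
transitivity (x ⋅ phi ⋅ x); first by rewrite d2x.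
by rewrite hxy -{1}y2 !cA x3' y2'.
Qed.

Lemma core_group {C : invAddCat} {X : Ob C} (phi c : Mor C X X) :
  is_core_inv phi c -> is_group_inv phi (c ⋅ c ⋅ phi).
Proof.
case=> c1 c2 c3.
have gp : c ⋅ c ⋅ phi ⋅ phi = c ⋅ phi by rewrite cA (cA c) c3.
split.
- by rewrite -(cA phi (c ⋅ c)) c2 cA c3.
- by rewrite gp (cA c) -(cA phi (c ⋅ c)) c2 -cA.
- by rewrite gp -(cA phi) c2.
Qed.

Lemma part3 {C : invAddCat} {X K L : Ob C}
  (phi : Mor C X X) (kap : Mor C K X) (lam : Mor C X L)
  (hk : is_kernel kap phi) (hl : is_cokernel phi lam)
  (psi : Mor C X X) (e : phi ⋅ psi ⋅ phi = phi)
  (u : Mor C L K) (v : Mor C K K) (w : Mor C L L)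
  (hu : is_inverse (kap ⋅ lam) u) (hv : is_inverse (kap ⋅ star kap) v)
  (hw : is_inverse (star lam ⋅ lam) w)
  (P1 Q1 E : Mor C X X)
  (eP : P1 = idm X - lam ⋅ w ⋅ star lam)
  (eQ : Q1 = idm X - star kap ⋅ v ⋅ kap)
  (eE : E = idm X - lam ⋅ u ⋅ kap) :
  [/\ is_MP phi (P1 ⋅ psi ⋅ Q1), is_group_inv phi (E ⋅ psi ⋅ E),
      is_core_inv phi (E ⋅ psi ⋅ Q1) & is_dual_core_inv phi (P1 ⋅ psi ⋅ E)].
Proof.
have [a [ea ka]] := ker_split hk e.
have [b [eb bl]] := coker_split hl e.
have h0 : kap ⋅ phi = 0 by case: hk.
have l0 : phi ⋅ lam = 0 by case: hl.
have pp : phi ⋅ psi = idm X - a ⋅ kap by rewrite -ea opprB addrC subrK.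
have qq : psi ⋅ phi = idm X - lam ⋅ b by rewrite -eb opprB addrC subrK.
have sv : star v = v.
  have := star_inv hv; rewrite sC sK => hv'; exact: inv_uniq hv' hv.
have sw : star w = w.
  have := star_inv hw; rewrite sC sK => hw'; exact: inv_uniq hw' hw.
case: hu => u1 u2; case: hv => v1 v2; case: hw => w1 w2.
have F1 : phi ⋅ E = phi by rewrite eE compBr cm1 -!cA l0 !comp0l subr0.
have F2 : E ⋅ phi = phi by rewrite eE compBl c1m !cA h0 !comp0r subr0.
have F3 : kap ⋅ E = 0 by rewrite eE compBr cm1 -!cA u1 c1m subrr.
have F4 : E ⋅ lam = 0 by rewrite eE compBl c1m !cA u2 cm1 subrr.
have F5 : Q1 ⋅ phi = phi by rewrite eQ compBl c1m !cA h0 !comp0r subr0.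
have F6 : kap ⋅ Q1 = 0 by rewrite eQ compBr cm1 -!cA v1 c1m subrr.
have F7 : star Q1 = Q1 by rewrite eQ starB star1 !sC sK sv cA.
have F8 : Q1 ⋅ E = E by rewrite eQ compBl c1m !cA F3 !comp0r subr0.
have F9 : phi ⋅ P1 = phi by rewrite eP compBr cm1 -!cA l0 !comp0l subr0.
have F10 : P1 ⋅ lam = 0 by rewrite eP compBl c1m !cA w2 cm1 subrr.
have F11 : star P1 = P1 by rewrite eP starB star1 !sC sK sw cA.
have F12 : E ⋅ P1 = E by rewrite eP compBr cm1 -!cA F4 !comp0l subr0.
have F13 : P1 ⋅ P1 = P1 by rewrite {2}eP compBr cm1 -!cA F10 !comp0l subr0.
have F14 : E ⋅ E = E by rewrite {2}eE compBr cm1 -!cA F4 !comp0l subr0.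
have M1 : phi ⋅ (P1 ⋅ psi ⋅ Q1) = Q1.
  by rewrite -(cA phi (P1 ⋅ psi)) -(cA phi P1) F9 pp compBl c1m (cA a) F6 comp0r subr0.
have M2 : P1 ⋅ psi ⋅ Q1 ⋅ phi = P1.
  by rewrite (cA (P1 ⋅ psi)) F5 (cA P1) qq compBr cm1 -(cA P1) F10 comp0l subr0.
have G1 : phi ⋅ (E ⋅ psi ⋅ E) = E.
  by rewrite -(cA phi (E ⋅ psi)) -(cA phi E) F1 pp compBl c1m (cA a) F3 comp0r subr0.
have G2 : E ⋅ psi ⋅ E ⋅ phi = E.
  by rewrite (cA (E ⋅ psi)) F2 (cA E) qq compBr cm1 -(cA E) F4 comp0l subr0.
have C1 : phi ⋅ (E ⋅ psi ⋅ Q1) = Q1.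
  by rewrite -(cA phi (E ⋅ psi)) -(cA phi E) F1 pp compBl c1m (cA a) F6 comp0r subr0.
have D1 : P1 ⋅ psi ⋅ E ⋅ phi = P1.
  by rewrite (cA (P1 ⋅ psi)) F2 (cA P1) qq compBr cm1 -(cA P1) F10 comp0l subr0.
split.
- split.
  + by rewrite M1 F5.
  + by rewrite M2 -(cA P1 (P1 ⋅ psi)) -(cA P1 P1) F13.
  + by rewrite M1 F7.
  + by rewrite M2 F11.
- split.
  + by rewrite G1 F2.
  + by rewrite G2 -(cA E (E ⋅ psi)) -(cA E E) F14.
  + by rewrite G1 G2.
- split.
  + by rewrite C1 F7.
  + by rewrite -(cA phi) C1 -(cA Q1 (E ⋅ psi)) -(cA Q1 E) F8.
  + rewrite (cA (E ⋅ psi)) -(cA Q1 phi) F5 -(cA (E ⋅ psi)) (cA E psi) qq compBr cm1.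
    by rewrite -(cA E lam) F4 comp0l subr0 F2.
- split.
  + by rewrite D1 F11.
  + by rewrite (cA (P1 ⋅ psi ⋅ E)) D1 (cA (P1 ⋅ psi)) F12.
  + rewrite (cA phi) -(cA phi (P1 ⋅ psi)) -(cA phi P1) F9 pp compBl c1m (cA a) F3.
    by rewrite comp0r subr0 F1.
Qed.

Theorem corollary3p5 (C : invAddCat) (X K L : Ob C)
  (phi : Mor C X X) (kap : Mor C K X) (lam : Mor C X L)
  (hk : is_kernel kap phi) (hl : is_cokernel phi lam) :
  let cond1 := core_invertible phi /\ dual_core_invertible phi in
  let cond2 := MP_invertible phi /\ group_invertible phi in
  let cond3 := [/\ regular phi, invertible (kap ⋅ lam),
                   invertible (kap ⋅ star kap) & invertible (star lam ⋅ lam)] in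
  [/\ cond1 <-> cond2, cond2 <-> cond3 &
   (cond3 ->
    forall (psi : Mor C X X), phi ⋅ psi ⋅ phi = phi ->
    forall (u : Mor C L K) (v : Mor C K K) (w : Mor C L L),
      is_inverse (kap ⋅ lam) u ->
      is_inverse (kap ⋅ star kap) v ->
      is_inverse (star lam ⋅ lam) w ->
      let P1 := idm X - lam ⋅ w ⋅ star lam in
      let Q1 := idm X - star kap ⋅ v ⋅ kap in
      let E := idm X - lam ⋅ u ⋅ kap in
      [/\ is_MP phi (P1 ⋅ psi ⋅ Q1) /\
            (forall chi, is_MP phi chi -> chi = P1 ⋅ psi ⋅ Q1),
          is_group_inv phi (E ⋅ psi ⋅ E) /\
            (forall chi, is_group_inv phi chi -> chi = E ⋅ psi ⋅ E),
          is_core_inv phi (E ⋅ psi ⋅ Q1) /\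
            (forall chi, is_core_inv phi chi -> chi = E ⋅ psi ⋅ Q1) &
          is_dual_core_inv phi (P1 ⋅ psi ⋅ E) /\
            (forall chi, is_dual_core_inv phi chi -> chi = P1 ⋅ psi ⋅ E)])].
Proof.
move=> cond1 cond2 cond3.
have P3 : forall (psi : Mor C X X), phi ⋅ psi ⋅ phi = phi ->
    forall (u : Mor C L K) (v : Mor C K K) (w : Mor C L L),
      is_inverse (kap ⋅ lam) u ->
      is_inverse (kap ⋅ star kap) v ->
      is_inverse (star lam ⋅ lam) w ->
      let P1 := idm X - lam ⋅ w ⋅ star lam in
      let Q1 := idm X - star kap ⋅ v ⋅ kap in
      let E := idm X - lam ⋅ u ⋅ kap in
      [/\ is_MP phi (P1 ⋅ psi ⋅ Q1) /\
            (forall chi, is_MP phi chi -> chi = P1 ⋅ psi ⋅ Q1),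
          is_group_inv phi (E ⋅ psi ⋅ E) /\
            (forall chi, is_group_inv phi chi -> chi = E ⋅ psi ⋅ E),
          is_core_inv phi (E ⋅ psi ⋅ Q1) /\
            (forall chi, is_core_inv phi chi -> chi = E ⋅ psi ⋅ Q1) &
          is_dual_core_inv phi (P1 ⋅ psi ⋅ E) /\
            (forall chi, is_dual_core_inv phi chi -> chi = P1 ⋅ psi ⋅ E)].
  move=> psi e u v w hu hv hw P1 Q1 E.
  have [m1 m2 m3 m4] := @part3 C X K L phi kap lam hk hl psi e u v w hu hv hw P1 Q1 E (erefl _) (erefl _) (erefl _).
  split; split=> // chi hc.
  - exact: MP_uniq hc m1.
  - exact: group_uniq hc m2.
  - exact: core_uniq hc m3.
  - exact: dcore_uniq hc m4.
have c3c12 : cond3 -> cond1 /\ cond2.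
  case=> [[psi e] [u hu] [v hv] [w hw]].
  have [[m1 _] [m2 _] [m3 _] [m4 _]] := P3 psi e u v w hu hv hw.
  by split; split; eexists; eassumption.
have c2c3 : cond2 -> cond3.
  case=> [[m hm] [g hg]]; have hm' := hm; case: hm' => m1 _ m3 m4.
  split; first by exists m.
  - exact: group_kl _ _ _ _ hk hl hg.
  - exact: ker_sym _ _ _ hk m1 m3.
  - exact: coker_sym _ _ _ hl m1 m4.
have c1c3 : cond1 -> cond3.
  case=> [[c hc] [d hd]].
  have c1 := core_d1 hc; have d1 := dcore_d1 hd.
  split; first by exists c.
  - exact: group_kl _ _ _ _ hk hl (core_group _ _ hc).
  - by case: hc => s _ _; exact: ker_sym _ _ _ hk c1 s.
  - by case: hd => s _ _; exact: coker_sym _ _ _ hl d1 s.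
split.
- split=> h; [exact: (c3c12 (c1c3 h)).2 | exact: (c3c12 (c2c3 h)).1].
- split=> h; [exact: c2c3 h | exact: (c3c12 h).2].
- move=> _; exact: P3.
Qed.
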